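(* Let $c_2,c_3,a_0,a_1,a_2,b_0,b_1$ be constants, $\mu(t)=t^2+c_2t+c_3$, $\phi=a_0\mu(t)^2+a_1\mu(t)+a_2$, $\psi=b_0\mu(t)+b_1$, $\lambda_n=n((n-1)a_0+b_0)$, and $\operatorname{L}_n=\phi\,\mathbb{D}^2+\psi\,\mathbb{S}\mathbb{D}-\lambda_n I$. Assume that for each $n\ge0$ there is a unique monic polynomial $P_n$ of degree $n$ in $\mu(t)$ with $\operatorname{L}_n(P_n)=0$ (i.e. $\phi\,\mathbb{D}^2P_n+\psi\,\mathbb{S}\mathbb{D}P_n=\lambda_nP_n$), and write $P_n=\vartheta_n+p_{1,n}\vartheta_{n-1}+p_{2,n}\vartheta_{n-2}+\cdots$. Then there exist sequences $\{\beta_n\}$ and $\{\gamma_n\}$ such that $$P_{n+1}=(\mu(t)-\beta_n)P_n-\gamma_nP_{n-1},$$ where $$\beta_n=p_{1,n}+f_n+\frac{k_{1,n+1}}{\lambda_n-\lambda_{n+1}},\qquad \gamma_n=\frac{t_n}{\lambda_{n-1}-\lambda_{n+1}},$$ $$t_n=k_{2,n+1}+(f_n+p_{1,n}-\beta_n)k_{1,n}+(p_{1,n}f_{n-1}+p_{2,n}-\beta_np_{1,n})(\lambda_{n-1}-\lambda_{n+1}).$$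
   Context: Operators: $\mathbb{D}f(t)=\frac{f(t+1/2)-f(t-1/2)}{\mu(t+1/2)-\mu(t-1/2)}$, $\mathbb{S}f(t)=\frac{f(t+1/2)+f(t-1/2)}{2}$, acting on polynomials in $\mu(t)$. Basis: $\vartheta_n(t)=(-4)^{-n}(2t+1/2+c_2)_n(-2t+1/2-c_2)_n$ (Pochhammer symbols), $\vartheta_k=0$ for $k<0$, monic of degree $n$ in $\mu(t)$, with $\mu(t)\vartheta_n=\vartheta_{n+1}+f_n\vartheta_n$ and $\mathbb{S}\vartheta_n=\vartheta_n+g_n\vartheta_{n-1}$, where $f_n=-\frac{c_2^2}{4}+\frac{(2n+1)^2}{16}+c_3$, $g_n=\frac{n(2n-1)}4$. Constants: $k_{1,j}=a_0j(j-1)(f_{j-1}+f_{j-2})+b_0jf_{j-1}+a_1j(j-1)+b_0jg_{j-1}+b_1j$, $k_{2,j}=a_0j(j-1)f_{j-2}^2+a_1j(j-1)f_{j-2}+b_0jg_{j-1}f_{j-2}+a_2j(j-1)+b_1jg_{j-1}$. *)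

(* Defs.v *)
(* All "functions of t" are polynomials in t over a number field R;
   a "polynomial in mu(t)" is  p \Po mu  with p : {poly R}. *)
From HB Require Import structures.
From mathcomp Require Import all_boot all_order all_algebra.
Set Implicit Arguments. Unset Strict Implicit. Unset Printing Implicit Defensive.
Import Order.TTheory GRing.Theory Num.Theory.
Local Open Scope ring_scope.

Section Defs.
Variable R : numFieldType.
Variables c2 c3 a0 a1 a2 b0 b1 : R.

Definition mu : {poly R} := 'X^2 + c2 *: 'X + c3%:P.

Definition shiftp (h : R) (f : {poly R}) : {poly R} := f \Po ('X + h%:P).

(* D f(t) = (f(t+1/2) - f(t-1/2)) / (mu(t+1/2) - mu(t-1/2)); on polynomials in mu
   this quotient is an exact polynomial division. *)
Definition Dop (f : {poly R}) : {poly R} :=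
  (shiftp 2^-1 f - shiftp (- 2^-1) f) %/ (shiftp 2^-1 mu - shiftp (- 2^-1) mu).

Definition Sop (f : {poly R}) : {poly R} :=
  2^-1 *: (shiftp 2^-1 f + shiftp (- 2^-1) f).

Definition phi : {poly R} := a0 *: mu ^+ 2 + a1 *: mu + a2%:P.
Definition psi : {poly R} := b0 *: mu + b1%:P.

(* lambda_n = n((n-1)a0 + b0), indexed by integers (lambda_{-1} is used) *)
Definition lambda (n : int) : R := n%:~R * ((n - 1)%:~R * a0 + b0).

Definition Lop (n : int) (F : {poly R}) : {poly R} :=
  phi * Dop (Dop F) + psi * Sop (Dop F) - lambda n *: F.

(* vartheta_n(t) = (-4)^{-n} (2t+1/2+c2)_n (-2t+1/2-c2)_n *)
Definition theta (n : nat) : {poly R} :=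
  ((-4 : R) ^+ n)^-1 *:
    \prod_(i < n) ((2%:R *: 'X + (2^-1 + c2 + i%:R)%:P) *
                   (- (2%:R *: 'X) + (2^-1 - c2 + i%:R)%:P)).

Definition theta_m1 (n : nat) : {poly R} := if n is m.+1 then theta m else 0.
Definition theta_m2 (n : nat) : {poly R} := if n is m.+2 then theta m else 0.

Definition fcoef (n : int) : R :=
  - (c2 ^+ 2 / 4%:R) + (2 * n + 1)%:~R ^+ 2 / 16%:R + c3.
Definition gcoef (n : int) : R := n%:~R * (2 * n - 1)%:~R / 4%:R.

Definition k1 (j : int) : R :=
  a0 * j%:~R * (j - 1)%:~R * (fcoef (j - 1) + fcoef (j - 2))
  + b0 * j%:~R * fcoef (j - 1) + a1 * j%:~R * (j - 1)%:~R
  + b0 * j%:~R * gcoef (j - 1) + b1 * j%:~R.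

Definition k2 (j : int) : R :=
  a0 * j%:~R * (j - 1)%:~R * fcoef (j - 2) ^+ 2
  + a1 * j%:~R * (j - 1)%:~R * fcoef (j - 2)
  + b0 * j%:~R * gcoef (j - 1) * fcoef (j - 2)
  + a2 * j%:~R * (j - 1)%:~R + b1 * j%:~R * gcoef (j - 1).

End Defs.

(* Main.v *)
Require Import Defs.
From HB Require Import structures.
From mathcomp Require Import all_boot all_order all_algebra.
From mathcomp Require Import ring lra zify.
Set Implicit Arguments. Unset Strict Implicit. Unset Printing Implicit Defensive.
Import Order.TTheory GRing.Theory Num.Theory.
Local Open Scope ring_scope.

Section Main.
Variable R : numFieldType.
Variables c2 c3 a0 a1 a2 b0 b1 : R.
Local Notation mu := (mu c2 c3).
Local Notation theta := (theta c2).
Local Notation th1 := (theta_m1 c2).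
Local Notation th2 := (theta_m2 c2).
Local Notation f k := (fcoef c2 c3 (Posz k)).
Local Notation g k := (gcoef R (Posz k)).
Local Notation Dop := (Dop c2 c3).
Local Notation Sop := (Sop (R:=R)).

Lemma poly_eval_inj (p q : {poly R}) : (forall x, p.[x] = q.[x]) -> p = q.
Proof.
move=> H; apply/eqP; rewrite -subr_eq0; apply/negPn/negP => nz.
have HH := @max_poly_roots _ (p - q) [seq i%:R | i <- iota 0 (size (p - q))] nz.
rewrite size_map size_iota ltnn in HH; suff : false by []; apply: HH.
  by apply/allP => x _; rewrite /root hornerD hornerN H subrr.
rewrite map_inj_uniq ?iota_uniq // => a b /eqP; by rewrite eqr_nat => /eqP.
Qed.

Lemma mu_eval x : mu.[x] = x ^+ 2 + c2 * x + c3.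
Proof. by rewrite /Defs.mu !hornerE. Qed.

Lemma theta_eval n x : (theta n).[x] = \prod_(i < n) (mu.[x] - f i).
Proof.
rewrite /Defs.theta hornerZ horner_prod.
rewrite (eq_bigr (fun i : 'I_n => (-4) * (mu.[x] - f i))); last first.
  move=> i _; rewrite !hornerE /fcoef /=; by field.
rewrite prodrMl card_ord mulKf //.
by rewrite expf_neq0 // oppr_eq0 pnatr_eq0.
Qed.

Definition T n : {poly R} := \prod_(i < n) ('X - (f i)%:P).

Lemma theta_T n : theta n = T n \Po mu.
Proof.
apply: poly_eval_inj => x; rewrite theta_eval horner_comp /T horner_prod.
by apply: eq_bigr => i _; rewrite hornerXsubC.
Qed.

Lemma TS n : T n.+1 = ('X - (f n)%:P) * T n.
Proof. by rewrite /T big_ord_recr /= mulrC. Qed.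

Lemma thetaS n : theta n.+1 = (mu - (f n)%:P) * theta n.
Proof. by rewrite !theta_T TS comp_polyM comp_polyB comp_polyX comp_polyC. Qed.

Lemma theta0 : theta 0 = 1.
Proof. by rewrite theta_T /T big_ord0 comp_polyC. Qed.

Lemma shift_eval (h : R) p x : (shiftp h p).[x] = p.[x + h].
Proof. by rewrite /shiftp horner_comp !hornerE. Qed.

Lemma hmuC (c y : R) : (mu - c%:P).[y] = y ^+ 2 + c2 * y + c3 - c.
Proof. by rewrite hornerD hornerN hornerC mu_eval. Qed.

Lemma th1S n : th1 n.+1 = theta n. Proof. by []. Qed.
Lemma th2S n : th2 n.+2 = theta n. Proof. by []. Qed.

Lemma thetaDS n x :
  (theta n).[x + 2^-1] - (theta n).[x - 2^-1] = n%:R * (2 * x + c2) * (th1 n).[x]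
  /\ (theta n).[x + 2^-1] + (theta n).[x - 2^-1] = 2 * ((theta n).[x] + g n * (th1 n).[x]).
Proof.
elim: n x => [|n IH] x.
  by rewrite theta0 /= !hornerE /gcoef; split; field.
rewrite thetaS th1S !hornerM !hmuC.
set A := (theta n).[x + 2^-1]; set B := (theta n).[x - 2^-1].
have eA : A = (theta n).[x] + g n * (th1 n).[x] + n%:R * 2^-1 * (2 * x + c2) * (th1 n).[x].
  have [H1' H2'] := IH x; rewrite -/A -/B in H1' H2'.
  rewrite (_ : A = 2^-1 * ((A + B) + (A - B))); last by field.
  by rewrite H1' H2'; field.
have eB : B = (theta n).[x] + g n * (th1 n).[x] - n%:R * 2^-1 * (2 * x + c2) * (th1 n).[x].
  have [H1' H2'] := IH x; rewrite -/A -/B in H1' H2'.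
  rewrite (_ : B = 2^-1 * ((A + B) - (A - B))); last by field.
  by rewrite H1' H2'; field.
rewrite eA eB.
case: n {IH A B eA eB} => [|m].
  by rewrite theta0 /= !hornerE /gcoef /fcoef; split; field.
rewrite th1S thetaS !hornerM !hmuC /gcoef /fcoef.
by split; field.
Qed.

Definition Delta : {poly R} := 2%:P * 'X + c2%:P.

Lemma Delta_eval x : Delta.[x] = 2 * x + c2.
Proof. by rewrite /Delta !hornerE. Qed.

Lemma shift_mu_diff : shiftp (2^-1) mu - shiftp (- 2^-1) mu = Delta.
Proof.
apply: poly_eval_inj => x.
by rewrite hornerD hornerN !shift_eval !mu_eval Delta_eval; by field.
Qed.

Lemma Delta_neq0 : Delta != 0.
Proof.
apply/eqP => e.
have e0 := congr1 (horner^~ 0) e; have e1 := congr1 (horner^~ 1) e.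
rewrite /= !Delta_eval horner0 in e0 e1.
have h2 : (2 : R) = (2 * 1 + c2) - (2 * 0 + c2) by ring.
rewrite e0 e1 subr0 in h2.
by move/eqP: h2; rewrite horner0 ?subr0 pnatr_eq0.
Qed.

Lemma Dop_theta n : Dop (theta n) = n%:R *: th1 n.
Proof.
rewrite /Defs.Dop shift_mu_diff.
rewrite (_ : shiftp _ _ - shiftp _ _ = (n%:R *: th1 n) * Delta).
  by rewrite mulpK // Delta_neq0.
apply: poly_eval_inj => x.
rewrite hornerD hornerN !shift_eval hornerM Delta_eval.
rewrite (thetaDS n x).1 hornerZ; ring.
Qed.

Lemma Sop_theta n : Sop (theta n) = theta n + g n *: th1 n.
Proof.
apply: poly_eval_inj => x.
rewrite /Defs.Sop [in LHS]hornerZ hornerD !shift_eval (thetaDS n x).2.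
rewrite hornerD [(_ *: th1 n).[x]]hornerZ; by field.
Qed.

Lemma DopD p q : Dop (p + q) = Dop p + Dop q.
Proof. by rewrite /Defs.Dop /shiftp !comp_polyD opprD addrACA divpD. Qed.

Lemma DopZ c p : Dop (c *: p) = c *: Dop p.
Proof. by rewrite /Defs.Dop /shiftp !comp_polyZ -scalerBr divpZl. Qed.

Lemma SopD p q : Sop (p + q) = Sop p + Sop q.
Proof. by rewrite /Defs.Sop /shiftp !comp_polyD addrACA scalerDr. Qed.

Lemma SopZ c p : Sop (c *: p) = c *: Sop p.
Proof. by rewrite /Defs.Sop /shiftp !comp_polyZ -scalerDr !scalerA mulrC. Qed.

Lemma Dop0 : Dop 0 = 0.
Proof. by have := DopZ 0 0; rewrite !scale0r. Qed.

Lemma Sop0 : Sop 0 = 0.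
Proof. by have := SopZ 0 0; rewrite !scale0r. Qed.

Local Notation phi := (phi c2 c3 a0 a1 a2).
Local Notation psi := (psi c2 c3 b0 b1).
Local Notation lam k := (lambda a0 b0 (Posz k)).
Local Notation K1 k := (k1 c2 c3 a0 a1 b0 b1 (Posz k)).
Local Notation K2 k := (k2 c2 c3 a0 a1 a2 b0 b1 (Posz k)).

Definition L0 (F : {poly R}) : {poly R} := phi * Dop (Dop F) + psi * Sop (Dop F).

Lemma LopE n F : Lop c2 c3 a0 a1 a2 b0 b1 n F = L0 F - lambda a0 b0 n *: F.
Proof. by []. Qed.

Lemma L0D p q : L0 (p + q) = L0 p + L0 q.
Proof. by rewrite /L0 !DopD SopD !mulrDr addrACA. Qed.

Lemma L0Z c p : L0 (c *: p) = c *: L0 p.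
Proof. by rewrite /L0 !DopZ SopZ -!scalerAr scalerDr. Qed.

Lemma L0_0 : L0 0 = 0.
Proof. by have := L0Z 0 0; rewrite !scale0r. Qed.

Lemma L0_sum (I : Type) (r : seq I) (F : I -> {poly R}) :
  L0 (\sum_(i <- r) F i) = \sum_(i <- r) L0 (F i).
Proof.
elim: r => [|i r IH]; first by rewrite !big_nil L0_0.
by rewrite !big_cons L0D IH.
Qed.

Lemma L0_theta j :
  L0 (theta j) = lam j *: theta j + K1 j *: th1 j + K2 j *: th2 j.
Proof.
case: j => [|[|m]].
- rewrite /L0 Dop_theta scale0r Dop0 Sop0 !mulr0 addr0 /= !scaler0 !addr0.
  by rewrite /lambda mul0r scale0r.
- rewrite /L0 Dop_theta /= DopZ Dop_theta scale0r scaler0 mulr0 add0r.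
  rewrite SopZ Sop_theta /= scaler0 addr0 !scaler0 addr0 thetaS theta0.
  apply: poly_eval_inj => x.
  rewrite /Defs.psi /Defs.mu !hornerE /= /k1 /lambda /gcoef /fcoef; by field.
- rewrite /L0 Dop_theta th1S DopZ Dop_theta th1S SopZ Sop_theta th1S th2S.
  rewrite !thetaS.
  apply: poly_eval_inj => x.
  rewrite !(hornerM, hornerZ, hornerD, hmuC).
  rewrite /Defs.psi /Defs.phi /Defs.mu !hornerE /= /k1 /k2 /lambda /gcoef /fcoef.
  by field; rewrite expf_neq0 // oppr_eq0 pnatr_eq0.
Qed.

Definition ev (B : nat -> {poly R}) N (v : nat -> R) : {poly R} :=
  \sum_(0 <= k < N) v k *: B k.
Definition supp N (v : nat -> R) := forall k, (N <= k)%N -> v k = 0.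

Lemma ev0n B v : ev B 0 v = 0.
Proof. by rewrite /ev big_geq. Qed.

Lemma evS B N v : ev B N.+1 v = ev B N v + v N *: B N.
Proof. by rewrite /ev big_nat_recr. Qed.

Lemma ev_widen B N M v : supp N v -> (N <= M)%N -> ev B M v = ev B N v.
Proof.
move=> s; elim: M => [|M IH] le; first by move: le; rewrite leqn0 => /eqP ->.
move: le; rewrite leq_eqVlt => /orP [/eqP -> // | lt].
by rewrite evS s // scale0r addr0 IH.
Qed.

Lemma ev_comp B N v q : ev B N v \Po q = ev (fun k => B k \Po q) N v.
Proof.
elim: N => [|N IH]; first by rewrite !ev0n comp_poly0.
by rewrite !evS comp_polyD comp_polyZ IH.
Qed.

Lemma evD B N u w : ev B N u + ev B N w = ev B N (fun k => u k + w k).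
Proof. by rewrite /ev -big_split; apply: eq_bigr => k _; rewrite scalerDl. Qed.

Lemma evB B N u w : ev B N u - ev B N w = ev B N (fun k => u k - w k).
Proof. by rewrite /ev -sumrB; apply: eq_bigr => k _; rewrite scalerBl. Qed.

Lemma evZ B N c u : c *: ev B N u = ev B N (fun k => c * u k).
Proof. by rewrite /ev scaler_sumr; apply: eq_bigr => k _; rewrite scalerA. Qed.

Lemma ev0 B N u : (forall k, u k = 0) -> ev B N u = 0.
Proof. by move=> h; rewrite /ev big1 // => k _; rewrite h scale0r. Qed.

Lemma ev_ext B N u w : (forall k, (k < N)%N -> u k = w k) -> ev B N u = ev B N w.
Proof.
move=> h; rewrite /ev big_nat_cond [RHS]big_nat_cond.
by apply: eq_bigr => k /andP [/andP [_ lt] _]; rewrite h.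
Qed.

Definition mbasis (B : nat -> {poly R}) :=
  forall k, B k \is monic /\ size (B k) = k.+1.

Lemma ev_size B N v : mbasis B -> (size (ev B N v) <= N)%N.
Proof.
move=> hB; elim: N => [|N IH]; first by rewrite ev0n size_poly0.
rewrite evS (leq_trans (size_polyD _ _)) // geq_max (leq_trans IH) //.
by rewrite (leq_trans (size_scale_leq _ _)) // (hB N).2.
Qed.

Lemma ev_indep B N v : mbasis B -> ev B N v = 0 -> forall k, (k < N)%N -> v k = 0.
Proof.
move=> hB; elim: N => [|N IH] // e k.
have hN : v N = 0.
  have := congr1 (fun p : {poly R} => p`_N) e.
  rewrite evS coefD coefZ coef0 /=.
  have /leq_sizeP -> // := ev_size N v hB.
  have [mB sB] := hB N.
  move: (mB) => /monicP; rewrite lead_coefE sB /= => ->.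
  by rewrite add0r mulr1.
rewrite evS hN scale0r addr0 in e.
rewrite ltnS leq_eqVlt => /orP [/eqP -> // | lt].
exact: IH.
Qed.

Lemma ev_expand B : mbasis B -> forall q : {poly R}, exists v, supp (size q) v /\ q = ev B (size q) v.
Proof.
move=> hB q; move: {2}(size q) (leqnn (size q)) => n; elim: n q => [|n IH] q hq.
  exists (fun _ => 0); move: hq; rewrite leqn0 size_poly_eq0 => /eqP ->.
  by rewrite size_poly0 ev0n; split.
have [hlt | heq] := boolP (size q <= n)%N; first exact: IH.
have sq : size q = n.+1 by apply/eqP; rewrite eqn_leq hq ltnNge heq.
set q' := q - lead_coef q *: B n.
have hq' : (size q' <= n)%N.
  apply/leq_sizeP => j hj; rewrite /q' coefB coefZ.
  have [mB sB] := hB n.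
  move: hj; rewrite leq_eqVlt => /orP [/eqP <- | lt].
    by move/monicP: mB; rewrite lead_coefE sB /= => ->; rewrite mulr1 lead_coefE sq subrr.
  have /leq_sizeP -> // : (size q <= j)%N by rewrite sq.
  have /leq_sizeP -> // : (size (B n) <= j)%N by rewrite sB.
  by rewrite mulr0 subrr.
have [v [sv ev']] := IH q' hq'.
exists (fun k => if k == n then lead_coef q else v k); split.
  move=> k; rewrite sq => hk; have -> : (k == n) = false by apply/negbTE; rewrite neq_ltn hk orbT.
  by apply: sv; apply: leq_trans hk; rewrite (leq_trans hq').
rewrite sq evS eqxx.
rewrite (@ev_ext _ _ _ v); last by move=> k hk; rewrite ltn_eqF.
rewrite (ev_widen B sv hq') -ev' /q'; by rewrite subrK.
Qed.

Lemma T_mbasis : mbasis T.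
Proof.
move=> k; split; first exact: monic_prod_XsubC.
by rewrite /T size_prod_XsubC [index_enum _]unlock -enumT size_enum_ord.
Qed.

Local Notation evt := (ev theta).

Lemma evt_T N v : evt N v = ev T N v \Po mu.
Proof. by rewrite ev_comp; apply: eq_bigr => k _; rewrite theta_T. Qed.

Lemma sum_widen (V : zmodType) (a : nat -> V) N M :
  (forall k, (N <= k)%N -> a k = 0) -> (N <= M)%N ->
  \sum_(0 <= k < M) a k = \sum_(0 <= k < N) a k.
Proof.
move=> s; elim: M => [|M IH] le; first by move: le; rewrite leqn0 => /eqP ->.
move: le; rewrite leq_eqVlt => /orP [/eqP -> // | lt].
by rewrite big_nat_recr //= s // addr0 IH.
Qed.

Definition Xc (v : nat -> R) (k : nat) : R := (if k is k'.+1 then v k' else 0) + f k * v k.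
Definition Lc (v : nat -> R) (k : nat) : R :=
  lam k * v k + K1 k.+1 * v k.+1 + K2 k.+2 * v k.+2.

Lemma mu_theta k : mu * theta k = theta k.+1 + f k *: theta k.
Proof. by rewrite thetaS mulrBl mul_polyC subrK. Qed.

Lemma supp_Xc N v : supp N v -> supp N.+1 (Xc v).
Proof. by move=> s [|k] // hk; rewrite /Xc !s ?mulr0 ?addr0 // ltnW. Qed.

Lemma supp_Lc N v : supp N v -> supp N (Lc v).
Proof. by move=> s k hk; rewrite /Lc !s ?mulr0 ?addr0 // ltnW // ltnW. Qed.

Lemma evt_X N v : supp N v -> mu * evt N v = evt N.+1 (Xc v).
Proof.
move=> s; rewrite /ev mulr_sumr.
rewrite (eq_bigr (fun k => v k *: theta k.+1 + (f k * v k) *: theta k)); last first.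
  by move=> k _; rewrite -scalerAr mu_theta scalerDr (scalerA (v k) (f k)) (mulrC (v k)).
rewrite big_split /=.
rewrite [RHS](eq_bigr (fun k => (if k is k'.+1 then v k' else 0) *: theta k + (f k * v k) *: theta k)); last first.
  by move=> k _; rewrite /Xc scalerDl.
rewrite [in RHS]big_split /= big_nat_recl // scale0r add0r; congr (_ + _).
by rewrite big_nat_recr //= s // mulr0 scale0r addr0.
Qed.

Lemma evt_L N v : supp N v -> L0 (evt N v) = evt N (Lc v).
Proof.
move=> s; rewrite /ev L0_sum.
rewrite (eq_bigr (fun k => (lam k * v k) *: theta k + (K1 k * v k) *: th1 k + (K2 k * v k) *: th2 k)); last first.
  by move=> k _; rewrite L0Z L0_theta !scalerDr (scalerA (v k) (lam k)) (scalerA (v k) (K1 k)) (scalerA (v k) (K2 k)) !(mulrC (v k)).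
rewrite !big_split /=.
rewrite [RHS](eq_bigr (fun k => (lam k * v k) *: theta k + (K1 k.+1 * v k.+1) *: theta k + (K2 k.+2 * v k.+2) *: theta k)); last first.
  by move=> k _; rewrite /Lc !scalerDl.
rewrite !big_split /=; congr (_ + _ + _).
  rewrite -(@sum_widen _ (fun k => (K1 k * v k) *: th1 k) N N.+1) //; last first.
    by move=> k hk; rewrite s // mulr0 scale0r.
  by rewrite big_nat_recl //= scaler0 add0r.
rewrite -(@sum_widen _ (fun k => (K2 k * v k) *: th2 k) N N.+2); last 2 first.
- by move=> k hk; rewrite s // mulr0 scale0r.
- by rewrite leqW.
by rewrite big_nat_recl //= scaler0 add0r big_nat_recl //= scaler0 add0r.
Qed.

Lemma racah_pt (v : nat -> R) k :
  Lc (Lc (Xc v)) k - 2 * Lc (Xc (Lc v)) k + Xc (Lc (Lc v)) k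
  - 2 * a0 * (Lc (Xc v) k + Xc (Lc v) k) - (b0^+2 - 2 * a0 * b0) * Xc v k
  - 2 * Lc (Lc v) k - (2 * a1 - b0) * Lc v k - (b0 - 2 * a0) * b1 * v k = 0.
Proof.
case: k => [|k]; rewrite /Lc /Xc /= /k1 /k2 /fcoef /gcoef /lambda.
- by field.
- by field.
Qed.

Definition racahE (F : {poly R}) : {poly R} :=
  L0 (L0 (mu * F)) - 2 *: L0 (mu * L0 F) + mu * L0 (L0 F)
  - (2 * a0) *: (L0 (mu * F) + mu * L0 F) - (b0^+2 - 2 * a0 * b0) *: (mu * F)
  - 2 *: L0 (L0 F) - (2 * a1 - b0) *: L0 F - ((b0 - 2 * a0) * b1) *: F.

Lemma racah_evt N v : supp N v -> racahE (evt N v) = 0.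
Proof.
move=> s; rewrite /racahE.
have sX := supp_Xc s; have sL := supp_Lc s.
have sLL := supp_Lc sL; have sXL := supp_Xc sL; have sLX := supp_Lc sX.
have sLLX := supp_Lc sLX; have sLXL := supp_Lc sXL; have sXLL := supp_Xc sLL.
rewrite (evt_X s) (evt_L sX) (evt_L sLX) (evt_L s) (evt_X sL) (evt_L sXL).
rewrite (evt_L sL) (evt_X sLL).
rewrite -(ev_widen theta sL (leqnSn N)) -(ev_widen theta sLL (leqnSn N)).
rewrite -(ev_widen theta s (leqnSn N)).
rewrite !(evZ theta) !(evD theta) !(evB theta) !(evZ theta) !(evD theta) !(evB theta).
apply: ev0 => k; rewrite -[RHS](racah_pt v k); ring.
Qed.

Lemma racah_poly q : racahE (q \Po mu) = 0.
Proof.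
have [v [sv ->]] := ev_expand T_mbasis q.
by rewrite -evt_T racah_evt.
Qed.

Lemma size_mu_gt1 : (1 < size mu)%N.
Proof.
rewrite ltnNge; apply/negP => /size1_polyC e.
have h0 := congr1 (horner^~ 0) e; have h1 := congr1 (horner^~ 1) e.
have hm := congr1 (horner^~ (-1)) e.
rewrite /= !hornerC !mu_eval in h0 h1 hm.
have : (2 : R) = (1 ^+ 2 + c2 * 1 + c3) + ((-1) ^+ 2 + c2 * (-1) + c3) - 2 * (0 ^+ 2 + c2 * 0 + c3).
  by ring.
rewrite h0 h1 hm => /eqP; rewrite (_ : mu`_0 + mu`_0 - 2 * mu`_0 = 0); last by ring.
by rewrite pnatr_eq0.
Qed.

Lemma comp_mu_inj p : p \Po mu = 0 -> p = 0.
Proof. by move/eqP; rewrite comp_poly_eq0 ?size_mu_gt1 // => /eqP. Qed.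

Definition low N (G : {poly R}) := exists r : {poly R}, (size r <= N)%N /\ G = r \Po mu.

Lemma low0 N : low N 0.
Proof. by exists 0; rewrite size_poly0 comp_poly0. Qed.

Lemma lowD N G H : low N G -> low N H -> low N (G + H).
Proof.
move=> [r [sr ->]] [s [ss ->]]; exists (r + s); split; last by rewrite comp_polyD.
by rewrite (leq_trans (size_polyD _ _)) // geq_max sr ss.
Qed.

Lemma lowZ N c G : low N G -> low N (c *: G).
Proof.
move=> [r [sr ->]]; exists (c *: r); split; last by rewrite comp_polyZ.
by rewrite (leq_trans (size_scale_leq _ _)).
Qed.

Lemma lowN N G : low N G -> low N (- G).
Proof. by move=> h; rewrite -scaleN1r; apply: lowZ. Qed.

Lemma lowB N G H : low N G -> low N H -> low N (G - H).
Proof. by move=> h1 h2; apply: lowD => //; apply: lowN. Qed.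

Lemma low_mono N M G : (N <= M)%N -> low N G -> low M G.
Proof. by move=> le [r [sr ->]]; exists r; split => //; apply: leq_trans le. Qed.

Lemma low_comp N (r : {poly R}) : (size r <= N)%N -> low N (r \Po mu).
Proof. by move=> h; exists r. Qed.

Lemma low_theta k N : (k < N)%N -> low N (theta k).
Proof.
by move=> h; exists (T k); rewrite theta_T (T_mbasis k).2; split.
Qed.

Lemma low_th1 j : low j (th1 j).
Proof. by case: j => [|j]; [apply: low0 | apply: low_theta]. Qed.

Lemma low_th2 j N : (j <= N.+1)%N -> low N (th2 j).
Proof.
by case: j => [|[|j]] h; [apply: low0 | apply: low0 | apply: low_theta].
Qed.

Lemma low_mu N G : low N G -> low N.+1 (mu * G).
Proof.
move=> [r [sr ->]]; exists ('X * r); split.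
  by rewrite (leq_trans (size_polyMleq _ _)) // size_polyX.
by rewrite comp_polyM comp_polyX.
Qed.

Lemma low_L0 N G : low N G -> low N (L0 G).
Proof.
move=> [r [sr ->]].
have [v [sv er]] := ev_expand T_mbasis r.
rewrite er -evt_T (evt_L sv) evt_T.
by apply: low_comp; rewrite (leq_trans (ev_size _ _ T_mbasis)).
Qed.

Lemma T_coef k : (T k)`_k = 1.
Proof.
have [m s] := T_mbasis k; move/monicP: m; by rewrite lead_coefE s.
Qed.

Lemma extract N a b J :
  a *: theta N.+1 + b *: theta N + J = 0 -> low N J -> a = 0 /\ b = 0.
Proof.
move=> e [r [sr er]].
rewrite er !theta_T -!comp_polyZ -!comp_polyD in e.
move/comp_mu_inj: e => e.
have eN1 := congr1 (fun p : {poly R} => p`_N.+1) e.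
have eN := congr1 (fun p : {poly R} => p`_N) e.
rewrite /= !coefD !coefZ coef0 T_coef in eN1 eN.
move/leq_sizeP: (sr) => hr.
have hT : (size (T N) <= N.+1)%N by rewrite (T_mbasis N).2.
move/leq_sizeP: hT => hT.
rewrite (hr N.+1) // (hr N) // (hT N.+1) // in eN1 eN.
rewrite mulr0 !addr0 mulr1 in eN1.
rewrite eN1 mul0r add0r T_coef addr0 mulr1 coef0 in eN.
by [].
Qed.

Lemma low_sub_monic N (p q : {poly R}) : p \is monic -> q \is monic -> size p = N.+1 -> size q = N.+1 ->
  (size (p - q)%R <= N)%N.
Proof.
move=> mp mq sp sq; apply/leq_sizeP => j; rewrite leq_eqVlt => /orP [/eqP <- | lt].
  rewrite coefB; move/monicP: mp; move/monicP: mq; rewrite !lead_coefE sp sq /= => -> ->.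
  by rewrite subrr.
rewrite coefB.
have /leq_sizeP -> // : (size p <= j)%N by rewrite sp.
have /leq_sizeP -> // : (size q <= j)%N by rewrite sq.
by rewrite subrr.
Qed.

Section Rec.
Variable P : nat -> {poly R}.
Hypothesis HP : forall n : nat, P n \is monic /\ size (P n) = n.+1 /\
     Lop c2 c3 a0 a1 a2 b0 b1 n%:Z (P n \Po mu) = 0.
Hypothesis Hu : forall (n : nat) (q : {poly R}), q \is monic -> size q = n.+1 ->
     Lop c2 c3 a0 a1 a2 b0 b1 n%:Z (q \Po mu) = 0 -> q = P n.

Local Notation F k := (P k \Po mu).
Local Notation Fam := (fun k => P k \Po mu).

Lemma L0F k : L0 (F k) = lam k *: F k.
Proof. by apply: subr0_eq; rewrite -LopE; exact: (HP k).2.2. Qed.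

Lemma P_mbasis : mbasis P.
Proof. by move=> k; have [m [s _]] := HP k. Qed.

Lemma lam_neq k m : (k < m)%N -> lam k != lam m.
Proof.
move=> lt; apply/eqP => e.
have hs : (size (P k) < size (P m))%N by rewrite (HP k).2.1 (HP m).2.1.
have E : P m + P k = P m.
  apply: Hu.
  - by apply/monicP; rewrite lead_coefDl //; apply/monicP; exact: (HP m).1.
  - by rewrite size_polyDl // (HP m).2.1.
  - by rewrite LopE comp_polyD L0D !L0F e scalerDr subrr.
have : P k = 0 by have := congr1 (fun x => x - P m) E; rewrite addrC addKr subrr.
by move=> h; move: (HP k).2.1; rewrite h size_poly0.
Qed.

Lemma L0ev N w : L0 (ev Fam N w) = ev Fam N (fun k => lam k * w k).
Proof.
rewrite /ev L0_sum; apply: eq_bigr => k _.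
by rewrite L0Z L0F (scalerA (w k) (lam k)) mulrC.
Qed.

Lemma rec3 n : exists b g : R,
  P n.+1 = ('X - b%:P) * P n - g *: (if n is m.+1 then P m else 0).
Proof.
have mX : 'X * P n \is monic by rewrite monicMl ?monicX // (HP n).1.
have sX : size ('X * P n) = n.+2.
  by rewrite mulrC size_mulX ?monic_neq0 ?(HP n).1 // (HP n).2.1.
have sq := low_sub_monic mX (HP n.+1).1 sX (HP n.+1).2.1.
have [v [sv eq]] := ev_expand P_mbasis ('X * P n - P n.+1).
rewrite -(ev_widen P sv sq) in eq.
pose C := fun k => if k == n.+1 then 1 else v k.
have hXP : 'X * P n = ev P n.+2 C.
  rewrite evS /C eqxx scale1r (@ev_ext _ _ _ v); last by move=> k hk; rewrite ltn_eqF.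
  by rewrite -eq subrK.
have hmuF : mu * F n = ev Fam n.+2 C.
  by rewrite -{1}(comp_polyX mu) -comp_polyM hXP ev_comp.
have Fn : F n = ev Fam n.+2 (fun k => if k == n then 1 else 0).
  rewrite !evS eqxx (gtn_eqF (ltnSn n)) scale0r addr0 scale1r.
  rewrite (@ev_ext _ _ _ (fun _ => 0)); last by move=> k hk; rewrite ltn_eqF.
  by rewrite ev0 // add0r.
have R0 := racah_poly (P n).
rewrite /racahE !L0F !L0Z !L0F -!scalerAr hmuF !L0ev !L0Z !L0ev Fn in R0.
rewrite !(evZ Fam) !(evD Fam) !(evB Fam) !(evZ Fam) !(evD Fam) !(evB Fam) in R0.

rewrite -ev_comp in R0.
have hz := ev_indep P_mbasis (comp_mu_inj R0).
have hv : forall k, (k.+1 < n)%N -> v k = 0.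
  move=> k hk; have := hz k (ltn_trans (ltnW hk) (ltnW (ltnSn _))).
  rewrite /C ltn_eqF; last by rewrite (ltn_trans (ltnW hk)).
  rewrite ltn_eqF; last exact: ltnW.
  case: n {sv eq sq mX sX hXP hmuF Fn R0 hz C} hk => [//|m] hk h.
  have : v k * ((lam k - lam m.+2) * (lam k - lam m)) = 0.
    by rewrite -[RHS]h /lambda; ring.
  move/eqP; rewrite !mulf_eq0 !subr_eq0 => /orP [/eqP -> // | /orP [] /eqP e].
    by move: (lam_neq (ltn_trans (ltnW hk) (ltnSn m.+1))) => /eqP ne; exfalso; exact: (ne e).
  by move: (@lam_neq k m hk) => /eqP ne; exfalso; exact: (ne e).
have eP : P n.+1 = 'X * P n - ev P n.+1 v by rewrite -eq; ring.
case: n {sv sq mX sX hXP hmuF Fn R0 hz C eq} hv eP => [|m] hv eP.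
  exists (v 0), 0; rewrite eP evS ev0n add0r -mul_polyC; ring.
exists (v m.+1), (v m); rewrite eP !evS.
rewrite (@ev_ext _ _ _ (fun _ => 0)); last by move=> k hk; rewrite hv.
rewrite ev0 // add0r -!mul_polyC; ring.
Qed.


Variables p1 p2 : nat -> R.
Hypothesis hp10 : p1 0%N = 0.
Hypothesis hp20 : p2 0%N = 0.
Hypothesis hp21 : p2 1%N = 0.
Hypothesis Hexp : forall n : nat, exists r : {poly R}, (size r <= n - 2)%N /\
     P n \Po mu = theta n + p1 n *: th1 n + p2 n *: th2 n + (r \Po mu).

Lemma low_mu_r N (r : {poly R}) : (size r <= N.-1)%N -> low N (mu * (r \Po mu)).
Proof.
case: N => [|N] /= h.
  by move: h; rewrite leqn0 size_poly_eq0 => /eqP ->; rewrite comp_poly0 mulr0; apply: low0.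
by apply: low_mu; apply: low_comp.
Qed.

Lemma low_mu_th2 N : low N (mu * th2 N).
Proof.
case: N => [|[|m]] /=; rewrite ?mulr0; try exact: low0.
rewrite mu_theta; apply: lowD; first exact: low_theta.
by apply: lowZ; apply: low_theta; rewrite ltnW.
Qed.

Lemma low_F m : low m.+1 (F m).
Proof. by apply: low_comp; rewrite (HP m).2.1. Qed.

Lemma low_Fsub m : low m (F m - theta m).
Proof.
rewrite theta_T -comp_polyB; apply: low_comp.
by apply: low_sub_monic; [exact: (HP m).1 | exact: (T_mbasis m).1 | exact: (HP m).2.1 | exact: (T_mbasis m).2].
Qed.

Lemma ident_beta n b g :
  P n.+1 = ('X - b%:P) * P n - g *: (if n is m.+1 then P m else 0) ->
  b = p1 n + f n + K1 n.+1 / (lam n - lam n.+1).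
Proof.
move=> hrec.
have hF : F n.+1 = (mu - b%:P) * F n - g *: (if n is m.+1 then F m else 0).
  by rewrite hrec; case: n {hrec} => [|m];
    rewrite comp_polyB comp_polyM comp_polyZ comp_polyB comp_polyX comp_polyC ?comp_poly0.
have [r [sr er]] := Hexp n.
have [r' [sr' er']] := Hexp n.+1.
rewrite th1S in er'.
pose Fm1 := if n is m.+1 then F m else 0.
pose J := p2 n.+1 *: th2 n.+1 + (r' \Po mu) - p1 n *: (mu * th1 n - theta n)
   - p2 n *: (mu * th2 n) - mu * (r \Po mu)
   + b *: (p1 n *: th1 n + p2 n *: th2 n + (r \Po mu)) + g *: Fm1.
have eX : 0 *: theta n.+1 + (p1 n.+1 - f n - p1 n + b) *: theta n + J = 0.
  rewrite /J; apply/eqP; rewrite -subr_eq0; apply/eqP.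
  rewrite -[RHS](subrr (F n.+1)).
  rewrite [X in _ = _ - X]hF -/Fm1 er' er thetaS -!mul_polyC; ring.
have lJ : low n J.
  rewrite /J; repeat apply: lowD.
  - by apply: lowZ; apply: low_th2.
  - by apply: low_comp; rewrite (leq_trans sr') //; lia.
  - apply: lowN; case: n {hF er er' sr sr' hrec J eX Fm1} => [|m]; first by rewrite hp10 scale0r; apply: low0.
    by apply: lowZ; rewrite th1S mu_theta addrC addKr; apply: lowZ; apply: low_theta.
  - by apply: lowN; apply: lowZ; apply: low_mu_th2.
  - by apply: lowN; apply: low_mu_r; rewrite (leq_trans sr) //; lia.
  - apply: lowZ; repeat apply: lowD.
    + by apply: lowZ; apply: low_th1.
    + by apply: lowZ; apply: low_th2.
    + by apply: low_comp; rewrite (leq_trans sr) //; lia.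
  - by apply: lowZ; rewrite /Fm1; case: n {hF er er' sr sr' hrec J eX Fm1} => [|m]; [apply: low0 | apply: low_F].
have [_ c1] := extract eX lJ.
pose J2 := K2 n.+1 *: th2 n.+1 + p1 n.+1 *: (K1 n *: th1 n + K2 n *: th2 n)
   + p2 n.+1 *: L0 (th2 n.+1) + L0 (r' \Po mu) - lam n.+1 *: (p2 n.+1 *: th2 n.+1 + (r' \Po mu)).
have eY : 0 *: theta n.+1 + (K1 n.+1 + p1 n.+1 * (lam n - lam n.+1)) *: theta n + J2 = 0.
  rewrite /J2; apply/eqP; rewrite -subr_eq0; apply/eqP.
  rewrite -[RHS](subrr (lam n.+1 *: F n.+1)).
  rewrite -[X in _ = X - _]L0F er' !L0D (L0_theta n.+1) (L0Z (p1 n.+1)) (L0Z (p2 n.+1)) (L0_theta n) th1S -!mul_polyC; ring.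
have lJ2 : low n J2.
  rewrite /J2; apply: lowB; last first.
    apply: lowZ; apply: lowD; first by apply: lowZ; apply: low_th2.
    by apply: low_comp; rewrite (leq_trans sr') //; lia.
  apply: lowD; last by apply: low_L0; apply: low_comp; rewrite (leq_trans sr') //; lia.
  apply: lowD; last by apply: lowZ; apply: low_L0; apply: low_th2.
  apply: lowD; first by apply: lowZ; apply: low_th2.
  by apply: lowZ; apply: lowD; apply: lowZ; [apply: low_th1 | apply: low_th2].
have [_ c2'] := extract eY lJ2.
have hl : lam n - lam n.+1 != 0 by rewrite subr_eq0 lam_neq.
have ep1 : p1 n.+1 = - K1 n.+1 / (lam n - lam n.+1).
  by move/eqP: c2'; rewrite addrC addr_eq0 => /eqP <-; rewrite mulfK.
have eb : b = p1 n + f n - p1 n.+1 by rewrite -[LHS]subr0 -c1; ring.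
by rewrite eb ep1; field.
Qed.

Lemma ident_gamma m b g :
  P m.+2 = ('X - b%:P) * P m.+1 - g *: P m ->
  g = (K2 m.+2 + (f m.+1 + p1 m.+1 - b) * K1 m.+1
       + (p1 m.+1 * f m + p2 m.+1 - b * p1 m.+1) * (lam m - lam m.+2))
      / (lam m - lam m.+2).
Proof.
move=> hrec.
have hF : F m.+2 = (mu - b%:P) * F m.+1 - g *: F m.
  by rewrite hrec comp_polyB comp_polyM comp_polyZ comp_polyB comp_polyX comp_polyC.
have [r [sr er]] := Hexp m.+1.
have [r' [sr' er']] := Hexp m.+2.
rewrite th1S in er; rewrite th1S th2S in er'.
pose J3 := (r' \Po mu) - p2 m.+1 *: (mu * th2 m.+1 - theta m) - mu * (r \Po mu)
   + b *: (p2 m.+1 *: th2 m.+1 + (r \Po mu)) + g *: (F m - theta m).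
have eX : (p1 m.+2 - f m.+1 - p1 m.+1 + b) *: theta m.+1
   + (p2 m.+2 - p1 m.+1 * f m - p2 m.+1 + b * p1 m.+1 + g) *: theta m + J3 = 0.
  rewrite /J3; apply/eqP; rewrite -subr_eq0; apply/eqP.
  rewrite -[RHS](subrr (F m.+2)).
  rewrite [X in _ = _ - X]hF er' er !thetaS -!mul_polyC; ring.
have lJ3 : low m J3.
  rewrite /J3; apply: lowD; last by apply: lowZ; apply: low_Fsub.
  apply: lowD; last first.
    apply: lowZ; apply: lowD; first by apply: lowZ; apply: low_th2.
    by apply: low_comp; rewrite (leq_trans sr) //; lia.
  apply: lowB; last by apply: low_mu_r; rewrite (leq_trans sr) //; lia.
  apply: lowB; first by apply: low_comp; rewrite (leq_trans sr') //; lia.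
  case: m {hF er er' sr sr' hrec J3 eX} => [|k]; first by rewrite hp21 scale0r; apply: low0.
  by apply: lowZ; rewrite th2S mu_theta addrC addKr; apply: lowZ; apply: low_theta.
have [ea ec] := extract eX lJ3.
pose J4 := p1 m.+2 *: (K2 m.+1 *: th2 m.+1) + p2 m.+2 *: (K1 m *: th1 m + K2 m *: th2 m)
   + L0 (r' \Po mu) - lam m.+2 *: (r' \Po mu).
have eY : (K1 m.+2 + p1 m.+2 * (lam m.+1 - lam m.+2)) *: theta m.+1
   + (K2 m.+2 + p1 m.+2 * K1 m.+1 + p2 m.+2 * (lam m - lam m.+2)) *: theta m + J4 = 0.
  rewrite /J4; apply/eqP; rewrite -subr_eq0; apply/eqP.
  rewrite -[RHS](subrr (lam m.+2 *: F m.+2)).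
  rewrite -[X in _ = X - _]L0F er' !L0D (L0_theta m.+2) (L0Z (p1 m.+2)) (L0Z (p2 m.+2)).
  rewrite (L0_theta m.+1) (L0_theta m) !th1S th2S -!mul_polyC; ring.
have lJ4 : low m J4.
  rewrite /J4; apply: lowB; last by apply: lowZ; apply: low_comp; rewrite (leq_trans sr') //; lia.
  apply: lowD; last by apply: low_L0; apply: low_comp; rewrite (leq_trans sr') //; lia.
  apply: lowD; first by apply: lowZ; apply: lowZ; apply: low_th2.
  by apply: lowZ; apply: lowD; apply: lowZ; [apply: low_th1 | apply: low_th2].
have [ea' ec'] := extract eY lJ4.
have hl : lam m - lam m.+2 != 0 by rewrite subr_eq0 lam_neq // leqnSn.
have eg : g = p1 m.+1 * f m + p2 m.+1 - b * p1 m.+1 - p2 m.+2 by rewrite -[LHS]subr0 -ec; ring.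
have ep1 : p1 m.+2 = f m.+1 + p1 m.+1 - b by rewrite -[LHS]subr0 -ea; ring.
have ep2 : p2 m.+2 = - (K2 m.+2 + p1 m.+2 * K1 m.+1) / (lam m - lam m.+2).
  by move/eqP: ec'; rewrite addrC addr_eq0 => /eqP <-; rewrite mulfK.
by rewrite eg ep2 ep1; field.
Qed.

End Rec.
End Main.

Lemma PoszS (n : nat) : (n%:Z + 1 = (n.+1)%:Z)%R.
Proof. by rewrite -addn1 PoszD. Qed.

Lemma PoszP (m : nat) : ((m.+1)%:Z - 1 = m%:Z)%R.
Proof. by rewrite -PoszS addrK. Qed.

Theorem lemma4p4 (R : numFieldType) (c2 c3 a0 a1 a2 b0 b1 : R)
    (P : nat -> {poly R}) (p1 p2 : nat -> R) :
  (forall n : nat, P n \is monic /\ size (P n) = n.+1 /\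
     Lop c2 c3 a0 a1 a2 b0 b1 n%:Z (P n \Po mu c2 c3) = 0) ->
  (forall (n : nat) (q : {poly R}), q \is monic -> size q = n.+1 ->
     Lop c2 c3 a0 a1 a2 b0 b1 n%:Z (q \Po mu c2 c3) = 0 -> q = P n) ->
  p1 0%N = 0 -> p2 0%N = 0 -> p2 1%N = 0 ->
  (forall n : nat, exists r : {poly R}, (size r <= n - 2)%N /\
     P n \Po mu c2 c3 = theta c2 n + p1 n *: theta_m1 c2 n + p2 n *: theta_m2 c2 n
                        + (r \Po mu c2 c3)) ->
  exists beta gamma : nat -> R,
    (forall n : nat, beta n = p1 n + fcoef c2 c3 n%:Z
        + k1 c2 c3 a0 a1 b0 b1 (n%:Z + 1) / (lambda a0 b0 n%:Z - lambda a0 b0 (n%:Z + 1))) /\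
    (forall n : nat, gamma n =
        (k2 c2 c3 a0 a1 a2 b0 b1 (n%:Z + 1)
         + (fcoef c2 c3 n%:Z + p1 n - beta n) * k1 c2 c3 a0 a1 b0 b1 n%:Z
         + (p1 n * fcoef c2 c3 (n%:Z - 1) + p2 n - beta n * p1 n)
             * (lambda a0 b0 (n%:Z - 1) - lambda a0 b0 (n%:Z + 1)))
        / (lambda a0 b0 (n%:Z - 1) - lambda a0 b0 (n%:Z + 1))) /\
    (forall n : nat, P n.+1 \Po mu c2 c3 =
        (mu c2 c3 - (beta n)%:P) * (P n \Po mu c2 c3)
        - gamma n *: (if n is m.+1 then P m \Po mu c2 c3 else 0)).
Proof.
move=> HP Hu hp10 hp20 hp21 Hexp.
pose beta := fun n : nat => p1 n + fcoef c2 c3 n%:Z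
        + k1 c2 c3 a0 a1 b0 b1 (n%:Z + 1) / (lambda a0 b0 n%:Z - lambda a0 b0 (n%:Z + 1)).
pose gamma := fun n : nat =>
        (k2 c2 c3 a0 a1 a2 b0 b1 (n%:Z + 1)
         + (fcoef c2 c3 n%:Z + p1 n - beta n) * k1 c2 c3 a0 a1 b0 b1 n%:Z
         + (p1 n * fcoef c2 c3 (n%:Z - 1) + p2 n - beta n * p1 n)
             * (lambda a0 b0 (n%:Z - 1) - lambda a0 b0 (n%:Z + 1)))
        / (lambda a0 b0 (n%:Z - 1) - lambda a0 b0 (n%:Z + 1)).
exists beta, gamma; split; first by [].
split; first by [].
move=> n; have [b [g hr]] := rec3 HP Hu n.
have eb : beta n = b.
  by rewrite (ident_beta HP Hu hp10 Hexp hr) /beta PoszS.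
case: n hr eb => [|m] hr eb.
  rewrite eb hr comp_polyB comp_polyM comp_polyB comp_polyX comp_polyC.
  by rewrite !scaler0 comp_poly0.
have eg : gamma m.+1 = g.
  by rewrite (ident_gamma HP Hu hp21 Hexp hr) /gamma eb !PoszS PoszP.
rewrite eb eg hr comp_polyB comp_polyM comp_polyZ comp_polyB comp_polyX comp_polyC.
by [].
Qed.
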